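(* Let $\mathbb{F}$ be a field, $n \ge 1$ an integer, and $I$ a non-trivial ideal of $\mathbb{F}[X_1,\ldots,X_n]$ such that the quotient space $\mathbb{F}[X_1,\ldots,X_n]/I$ has finite dimension $K$ over $\mathbb{F}$. Let $G(I)$ be the reduced Gröbner basis of $I$ with respect to the graded lexicographic order. Then $$|G(I)| \le (n-1)K + 1,$$ and equality holds if and only if $K = 1$ or $n = 1$.
   Context: The graded lexicographic order compares monomials first by total degree and then lexicographically (with $X_1 > X_2 > \cdots > X_n$). A Gröbner basis of a non-zero ideal $I$ with respect to a monomial order is a finite generating set $G$ of $I$ such that the leading monomial of every $f \in I$ is divisible by the leading monomial of some element of $G$; it is reduced if each element is monic and no leading monomial of an element divides any non-zero term of another element. Each non-zero ideal has a unique reduced Gröbner basis for a given monomial order. *)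

(* Defs.v *)
From HB Require Import structures.
From mathcomp Require Import all_boot all_order all_algebra.
From mathcomp Require Import mpoly.

Set Implicit Arguments.
Unset Strict Implicit.
Unset Printing Implicit Defensive.

Import Order.TTheory GRing.Theory.
Local Open Scope ring_scope.

(* Variables: X_1,...,X_n are 'X_0,...,'X_(n-1) (indices in 'I_n).
   Monomial order: the canonical total order (<= )%O on 'X_{1..n} from
   mpoly.v is  mnmc_le m1 m2 := (mdeg m1 :: m1 <= mdeg m2 :: m2)  in the
   lexicographic order on sequences, i.e. first by total degree, then
   lexicographically with X_1 > X_2 > ... > X_n: this is exactly the graded
   lexicographic order (see [grlex_ltP] below).  [mlead p] is the maximum of
   the support of p for this order, i.e. the grlex leading monomial. *)

Lemma grlex_ltP (n : nat) (m1 m2 : 'X_{1..n}) :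
  mdeg m1 = mdeg m2 ->
  reflect (exists2 i : 'I_n, (forall j : 'I_n, (j < i)%N -> m1 j = m2 j)
                             & (m1 i < m2 i)%N)
          (m1 < m2)%O.
Proof. exact: ltmcP. Qed.

Lemma grlex_lt_mdeg (n : nat) (m1 m2 : 'X_{1..n}) :
  (mdeg m1 < mdeg m2)%N -> (m1 < m2)%O.
Proof. exact: lt_mdeg_ltmc. Qed.

Definition is_ideal (F : fieldType) (n : nat) (I : {mpoly F[n]} -> Prop) :=
  [/\ I 0,
      (forall p q, I p -> I q -> I (p + q)) &
      (forall p q, I p -> I (q * p))].

Definition quot_dim (F : fieldType) (n : nat) (I : {mpoly F[n]} -> Prop)
    (K : nat) :=
  exists b : 'I_K -> {mpoly F[n]},
    (forall c : 'I_K -> F, I (\sum_(i < K) c i *: b i) -> forall i, c i = 0)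
    /\ (forall p, exists c : 'I_K -> F, I (p - \sum_(i < K) c i *: b i)).

Definition groebner_basis (F : fieldType) (n : nat) (I : {mpoly F[n]} -> Prop)
    (G : seq {mpoly F[n]}) :=
  [/\ uniq G,
      (forall p, I p <-> exists q : {mpoly F[n]} -> {mpoly F[n]},
                            p = \sum_(g <- G) q g * g) &
      (forall f, I f -> f != 0 ->
         exists2 g, g \in G & (mlead g <= mlead f)%MM)].

Definition reduced_groebner_basis (F : fieldType) (n : nat)
    (I : {mpoly F[n]} -> Prop) (G : seq {mpoly F[n]}) :=
  [/\ groebner_basis I G,
      (forall g, g \in G -> mleadc g = 1) &
      (forall g g', g \in G -> g' \in G -> g != g' ->
         forall m, m \in msupp g' -> ~~ (mlead g <= m)%MM)].

(* Main.v *)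
Require Import Defs.
From HB Require Import structures.
From mathcomp Require Import all_boot all_order all_algebra.
From mathcomp Require Import mpoly.
From mathcomp Require Import zify.
Set Implicit Arguments.
Unset Strict Implicit.
Unset Printing Implicit Defensive.
Import Order.TTheory GRing.Theory.

Section Comb.
Variable n : nat.
Implicit Types (a m : 'X_{1..n}).

Lemma lem_anti m1 m2 : (m1 <= m2)%MM -> (m2 <= m1)%MM -> m1 = m2.
Proof.
move=> /mnm_lepP h1 /mnm_lepP h2; apply/mnmP => i.
by apply/eqP; rewrite eqn_leq h1 h2.
Qed.

Lemma mnm_neq0 m : m != 0%MM -> exists j, m j != 0%N.
Proof.
move=> h; apply/existsP; apply: contraNT h; rewrite negb_exists => /forallP h.
by apply/eqP/mnmP => j; rewrite mnm0E; move: (h j); rewrite negbK => /eqP.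
Qed.

Lemma size_le1 (T : eqType) (s : seq T) :
  uniq s -> (forall x y, x \in s -> y \in s -> x = y) -> (size s <= 1)%N.
Proof.
case: s => [|x [|y s]] //= /andP [hx _] h.
by move: hx; rewrite (h x y) ?inE ?eqxx ?orbT.
Qed.

Lemma comb (A : seq 'X_{1..n}) (Kb : nat) :
  (0 < n)%N -> uniq A ->
  (forall a a', a \in A -> a' \in A -> (a <= a')%MM -> a = a') ->
  (forall a, a \in A -> a != 0%MM) ->
  (forall s : seq 'X_{1..n}, uniq s ->
      (forall m, m \in s -> forall a, a \in A -> ~~ (a <= m)%MM) ->
      (size s <= Kb)%N) ->
  (size A <= (n - 1) * Kb + 1)%N /\
  ((1 < n)%N -> (1 < Kb)%N -> (size A < (n - 1) * Kb + 1)%N).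
Proof.
move=> n0 uA anti nz bound.
pose i0 : 'I_n := Ordinal n0.
pose ix a := [pick i : 'I_n | (i != i0) && (a i != 0%N)].
pose A1 := [seq a <- A | ix a != None].
pose A0 := [seq a <- A | ix a == None].
have szA : size A = (size A0 + size A1)%N.
  rewrite !size_filter addnC; rewrite -(count_predC (fun a => ix a != None)).
  by congr (_ + _)%N; apply: eq_count => a /=; rewrite negbK.
have szA0 : (size A0 <= 1)%N.
  apply: size_le1; first by rewrite filter_uniq.
  move=> x y; rewrite !mem_filter => /andP [hx xA] /andP [hy yA].
  have pure : forall z, ix z == None -> forall j : 'I_n, j != i0 -> z j = 0%N.
    move=> z; rewrite /ix; case: pickP => // hz _ j hj.
    by move: (hz j); rewrite hj /= => /negbFE /eqP.
  have [le|le] := leqP (x i0) (y i0).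
  - apply: anti => //; apply/mnm_lepP => j.
    case: (eqVneq j i0) => [->//|hj]; by rewrite (pure x hx j hj).
  - apply/esym/anti => //; apply/mnm_lepP => j.
    case: (eqVneq j i0) => [->|hj]; first exact: ltnW.
    by rewrite (pure y hy j hj).
pose phi a := if ix a is Some i then ((a - U_(i))%MM, i) else (a, i0).
have ixP : forall a i, ix a = Some i -> (i != i0) && (a i != 0%N).
  move=> a i; rewrite /ix; case: pickP => // j hj [<-] //.
have ixU : forall a i, ix a = Some i -> (U_(i) <= a)%MM.
  by move=> a i /ixP /andP [_ h]; rewrite lep1mP.
pose T := undup (0%MM :: map (fun a => (phi a).1) A1).
pose J := [seq i <- enum 'I_n | i != i0].
pose P := [seq (t, i) | t <- T, i <- J].
pose L := map phi A1.
have szJ : size J = (n - 1)%N.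
  rewrite size_filter.
  have := count_predC (fun i : 'I_n => i != i0) (enum 'I_n).
  rewrite size_enum_ord.
  have -> : count (predC (fun i : 'I_n => i != i0)) (enum 'I_n) = 1%N.
    rewrite (eq_count (a2 := pred1 i0)); last by move=> i /=; rewrite negbK.
    by rewrite count_uniq_mem ?enum_uniq // mem_enum.
  by move/(congr1 (fun x => x - 1)%N); rewrite addnK.
have uP : uniq P.
  apply: allpairs_uniq; [exact: undup_uniq | by rewrite filter_uniq ?enum_uniq |].
  by move=> [x1 y1] [x2 y2] _ _ /= [-> ->].
have uL : uniq L.
  rewrite map_inj_in_uniq ?filter_uniq //.
  move=> a a'; rewrite !mem_filter /phi.
  case ha: (ix a) => [i|] //; case ha': (ix a') => [i'|] // _ _ e.
  have e1 : (a - U_(i))%MM = (a' - U_(i'))%MM := f_equal fst e.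
  have e2 : i = i' := f_equal snd e.
  subst i'; have := submK (ixU _ _ ha); have := submK (ixU _ _ ha').
  by rewrite e1 => -> ->.
have LP : {subset L <= P}.
  move=> x /mapP [a]; rewrite mem_filter => /andP [hs aA] ->.
  have hph : (phi a).1 \in T.
    by rewrite mem_undup inE; apply/orP; right; apply: map_f; rewrite mem_filter hs.
  move: hph; rewrite /phi; case ha: (ix a) hs => [i|] // _ hph.
  by apply: allpairs_f => //; rewrite mem_filter mem_enum andbT; case/andP: (ixP _ _ ha).
have std0 : forall a, a \in A -> ~~ (a <= 0%MM)%MM.
  move=> a aA; apply/negP => h; have := nz a aA; rewrite (lem_anti h) ?eqxx //.
  by apply/mnm_lepP => i; rewrite mnm0E.
have stdT : forall m, m \in T -> forall a, a \in A -> ~~ (a <= m)%MM.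
  move=> m; rewrite mem_undup inE => /orP [/eqP -> //|].
  move=> /mapP [a']; rewrite mem_filter /phi; case ha: (ix a') => [i|] // /andP [_ a'A] -> a aA /=.
  apply/negP => h.
  have ha'' : (a <= a')%MM.
    apply: lepm_trans h _; exact: lem_subr.
  have e := anti _ _ aA a'A ha''; subst a.
  move: h => /mnm_lepP /(_ i); rewrite mnmBE mnm1E eqxx /=.
  case/andP: (ixP _ _ ha) => _; rewrite -lt0n => pos; lia.
have szT : (size T <= Kb)%N by apply: bound => //; exact: undup_uniq.
have szP : size P = (size T * (n - 1))%N by rewrite size_allpairs szJ.
have szL : size L = size A1 by rewrite size_map.
have LleP : (size A1 <= size T * (n - 1))%N by rewrite -szL -szP; exact: uniq_leq_size.
split.
  rewrite szA; have : (size T * (n - 1) <= Kb * (n - 1))%N by rewrite leq_mul2r szT orbT.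
  lia.
move=> n1 K1.
have [Tsm|Tbig] := leqP (size T) 1.
  rewrite szA.
  have : (size A1 <= n - 1)%N.
    apply: leq_trans LleP _; rewrite -[X in (_ <= X)%N]mul1n leq_mul2r Tsm orbT //.
  nia.
have [t tT tnz] : exists2 t, t \in T & t != 0%MM.
  case: (boolP (has (fun t => t != 0%MM) T)) => [/hasP [t tT tnz]|/hasPn h].
    by exists t.
  suff : (size T <= 1)%N by rewrite leqNgt Tbig.
  apply: size_le1; first exact: undup_uniq.
  by move=> x y /h /negbNE /eqP -> /h /negbNE /eqP ->.
have i1lt : (1 < n)%N by [].
pose i1 : 'I_n := Ordinal i1lt.
have i1i0 : i1 != i0 by [].
pose q := if U_(i1)%MM \in A then (t, i1) else (0%MM, i1).
have i1J : i1 \in J by rewrite mem_filter mem_enum andbT.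
have qP : q \in P.
  rewrite /q; case: ifP => _; apply: allpairs_f => //.
  by rewrite mem_undup inE eqxx.
have qL : q \notin L.
  apply/negP => /mapP [a]; rewrite mem_filter /phi /q => /andP [hs aA].
  case ha: (ix a) hs => [i|] // _.
  have aeq : a = ((a - U_(i)) + U_(i))%MM by rewrite submK // (ixU _ _ ha).
  case: ifP => hU e;
  [have e1 : t = (a - U_(i))%MM := f_equal fst e
  |have e1 : 0%MM = (a - U_(i))%MM := f_equal fst e];
  have e2 : i1 = i := f_equal snd e; subst i.
  - have hle : (U_(i1) <= a)%MM by rewrite (ixU _ _ ha).
    have ee := anti _ _ hU aA hle.
    by move: tnz; rewrite e1 -ee; rewrite -[X in (X - _)%MM]add0m addmK eqxx.
  - by move: hU; rewrite -e1 add0m in aeq; rewrite -aeq aA.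
have LrP : {subset L <= rem q P}.
  move=> x xL; rewrite (mem_rem_uniq _ uP) inE (LP _ xL) andbT.
  by apply: contraNneq qL => <-.
have := uniq_leq_size uL LrP; rewrite size_rem // szP szL => h.
rewrite szA.
have : (size T * (n - 1) <= Kb * (n - 1))%N by rewrite leq_mul2r szT orbT.
have : (0 < size T * (n - 1))%N by rewrite muln_gt0; apply/andP; split; lia.
lia.
Qed.
End Comb.
Section Lin.
Local Open Scope ring_scope.
Variables (F : fieldType) (n : nat) (I : {mpoly F[n]} -> Prop).
Hypothesis hI : is_ideal I.

Lemma ideal_sum (T : Type) (r : seq T) (f : T -> {mpoly F[n]}) :
  (forall x, I (f x)) -> I (\sum_(x <- r) f x).
Proof.
case: hI => I0 IA _ h; elim: r => [|x r ih]; first by rewrite big_nil.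
by rewrite big_cons; apply: IA.
Qed.

Lemma ideal_scale c p : I p -> I (c *: p).
Proof. by case: hI => _ _ IM h; rewrite -mul_mpolyC; apply: IM. Qed.

Lemma std_bound K (G : seq {mpoly F[n]}) :
  quot_dim I K ->
  (forall f, I f -> f != 0 -> exists2 g, g \in G & (mlead g <= mlead f)%MM) ->
  forall s : seq 'X_{1..n}, uniq s ->
   (forall m, m \in s -> forall g, g \in G -> ~~ (mlead g <= m)%MM) ->
   (size s <= K)%N.
Proof.
move=> [b [_ bspan]] gb s us ss.
rewrite leqNgt; apply/negP => Ks.
pose N := size s.
have : forall j : 'I_N, exists c : 'I_K -> F,
    I ('X_[nth 0%MM s j] - \sum_(i < K) c i *: b i) by move=> j; exact: bspan.
case/fin_all_exists => c hc.
pose C : 'M[F]_(N, K) := \matrix_(j, i) c j i.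
have : kermx C != 0.
  rewrite -mxrank_eq0 mxrank_ker; have := rank_leq_col C.
  rewrite /N; move: (\rank C) => r; lia.
case/rowV0Pn => d /sub_kermxP dC dnz.
pose p := \sum_(j < N) d 0 j *: ('X_[nth 0%MM s j] : {mpoly F[n]}).
have z : forall i, \sum_(j < N) d 0 j * c j i = 0.
  move=> i; have := congr1 (fun M : 'M_(1, K) => M 0 i) dC; rewrite !mxE => h.
  rewrite -[X in _ = X]h; apply: eq_bigr => j _; by rewrite ?mxE.
have Ip : I p.
  suff <- : \sum_(j < N) d 0 j *: ('X_[nth 0%MM s j] - \sum_(i < K) c j i *: b i) = p.
    by apply: ideal_sum => j; apply: ideal_scale.
  under eq_bigr do rewrite scalerBr.
  rewrite sumrB [X in _ - X](_ : _ = 0) ?subr0 //.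
  rewrite (eq_bigr (fun j => \sum_(i < K) (d 0 j * c j i) *: b i)); last first.
    by move=> j _; rewrite scaler_sumr; apply: eq_bigr => i _; rewrite scalerA.
  rewrite exchange_big /= big1 // => i _.
  by rewrite -scaler_suml z scale0r.
have coef : forall m, p@_m = \sum_(j < N) d 0 j * (nth 0%MM s j == m)%:R.
  move=> m; rewrite /p raddf_sum; apply: eq_bigr => j _.
  by rewrite /= mcoeffZ mcoeffX.
have [j0 dj0] : exists j0, d 0 j0 != 0.
  apply/existsP; apply: contraNT dnz; rewrite negb_exists => /forallP h.
  apply/eqP/rowP => j; rewrite mxE; apply/eqP; move: (h j); by rewrite negbK.
have pnz : p != 0.
  apply/negP => /eqP p0; move: dj0; rewrite -(mcoeff0 _ (nth 0%MM s j0)) -p0 coef.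
  rewrite (bigD1 j0) //= eqxx mulr1 big1 ?addr0 ?eqxx // => k hk.
  rewrite nth_uniq ?ltn_ord //; move: hk; rewrite -val_eqE => /negbTE ->.
  by rewrite mulr0.
have ins : mlead p \in s.
  have := mlead_supp pnz; rewrite mcoeff_msupp coef; apply: contraR => ns.
  apply/eqP; apply: big1 => j _.
  case: eqP => [e|_]; last by rewrite mulr0.
  by move: ns; rewrite -e mem_nth.
have [g gG hg] := gb p Ip pnz.
by move: (ss _ ins g gG); rewrite hg.
Qed.
End Lin.

Theorem mainTheorem2 (F : fieldType) (n : nat) (I : {mpoly F[n]} -> Prop)
    (K : nat) (G : seq {mpoly F[n]}) :
  (1 <= n)%N ->
  is_ideal I ->
  ~ I (1%R : {mpoly F[n]}) ->
  (exists p, I p /\ p != 0%R :> {mpoly F[n]}) ->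
  quot_dim I K ->
  reduced_groebner_basis I G ->
  (size G <= (n - 1) * K + 1)%N /\
  (size G = ((n - 1) * K + 1)%N <-> K = 1%N \/ n = 1%N).
Proof.
move=> n1 hI I1 [p0 [Ip0 p0nz]] qd [[uG Igen gb] monic red].
pose A := map (fun g : {mpoly F[n]} => mlead g) G.
have gnz : forall g, g \in G -> g != 0%R.
  move=> g gG; apply/negP => /eqP g0; move: (monic g gG).
  by rewrite g0 mleadc0 => /eqP; rewrite eq_sym oner_eq0.
have injG : {in G &, injective (fun g : {mpoly F[n]} => mlead g)}.
  move=> g g' gG g'G e; apply/eqP; apply: contraT => ne.
  have := red g g' gG g'G ne (mlead g') (mlead_supp (gnz g' g'G)).
  by rewrite e lepm_refl.
have szA : size A = size G by rewrite size_map.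
have uA : uniq A by rewrite map_inj_in_uniq.
have anti : forall a a', a \in A -> a' \in A -> (a <= a')%MM -> a = a'.
  move=> a a' /mapP [g gG ->] /mapP [g' g'G ->] h.
  case: (eqVneq g g') => [->//|ne].
  by move: (red g g' gG g'G ne _ (mlead_supp (gnz g' g'G))); rewrite h.
have IG : forall g, g \in G -> I g.
  move=> g gG; apply/Igen; exists (fun h => ((h == g)%:R)%R).
  rewrite (bigD1_seq g) //= eqxx mul1r big1 ?addr0 // => h /negbTE ->.
  by rewrite mul0r.
have nz : forall a, a \in A -> a != 0%MM.
  move=> a /mapP [g gG ->]; apply/negP => /eqP h.
  apply: I1; suff <- : g = 1%R by apply: IG.
  apply/mpolyP => m; rewrite -mpolyX0 mcoeffX.
  case: (eqVneq 0%MM m) => [<-|ne]; first by rewrite -h monic.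
  rewrite /=; apply/eqP; rewrite mcoeff_eq0; apply/negP => ms.
  have := msupp_le_mlead ms; rewrite h => le.
  by move: ne; rewrite (@le_anti _ _ 0%MM m) ?eqxx // le le0m.
have bound : forall s : seq 'X_{1..n}, uniq s ->
    (forall m, m \in s -> forall a, a \in A -> ~~ (a <= m)%MM) -> (size s <= K)%N.
  move=> s us h; apply: (std_bound hI qd gb) => // m ms g gG.
  by apply: h => //; exact: map_f.
have [cb cs] := comb n1 uA anti nz bound.
have le0 : forall a : 'X_{1..n}, (a <= 0%MM)%MM -> a = 0%MM.
  by move=> a le; apply: lem_anti le _; apply/mnm_lepP => i; rewrite mnm0E.
have K1 : (1 <= K)%N.
  apply: (bound [:: 0%MM]) => // m; rewrite inE => /eqP -> a aA.
  by apply/negP => /le0 e; move: (nz a aA); rewrite e eqxx.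
rewrite -szA; split => //.
split.
  move=> e; case: (eqVneq n 1%N) => [->|nn1]; [by right|left].
  apply/eqP; apply: contraT => kn.
  have := cs ltac:(lia) ltac:(lia); lia.
case => [K1e|n1e].
  have Ui : forall i : 'I_n, U_(i)%MM \in A.
    move=> i; case: (boolP (has (fun a => (a <= U_(i))%MM) A)) => [/hasP [a aA le]| /hasPn h].
      have [j aj] := mnm_neq0 (nz a aA).
      have Uj : (U_(j) <= a)%MM by rewrite lep1mP.
      have Uji : (U_(j) <= U_(i))%MM := lepm_trans Uj le.
      have ji : j = i.
        move: Uji => /mnm_lepP /(_ j); rewrite !mnm1E eqxx.
        by case: eqP.
      subst j; by rewrite (lem_anti Uj le).
    suff : (size [:: 0%MM; U_(i)%MM] <= K)%N by rewrite K1e.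
    apply: bound; first by rewrite /= inE eq_sym mnm1_eq0.
    move=> m; rewrite !inE => /orP [/eqP ->|/eqP ->] a aA.
      by apply/negP => /le0 e; move: (nz a aA); rewrite e eqxx.
    exact: h.
  have allU : forall a, a \in A -> exists i, a = U_(i)%MM.
    move=> a aA; have [j aj] := mnm_neq0 (nz a aA).
    exists j; apply/esym/anti => //; by rewrite lep1mP.
  have pe : perm_eq A (map (fun i : 'I_n => U_(i)%MM) (enum 'I_n)).
    apply: uniq_perm => //.
      rewrite map_inj_uniq ?enum_uniq // => i j /eqP; by rewrite eq_mnm1 => /eqP.
    move=> a; apply/idP/idP.
      by move=> /allU [i ->]; apply: map_f; rewrite mem_enum.
    by move=> /mapP [i _ ->].
  rewrite (perm_size pe) size_map size_enum_ord K1e; lia.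
have gex := gb p0 Ip0 p0nz; case: gex => g gG _.
have gA : mlead g \in A := map_f (fun g : {mpoly F[n]} => mlead g) gG.
have pos : (0 < size A)%N by rewrite lt0n; apply/eqP => /size0nil h; rewrite h in gA.
have : ((n - 1) * K + 1 = 1)%N by rewrite n1e.
lia.
Qed.
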